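(* Let $k\colon K\to T1$ be an $n$-globular operad equipped with a contraction and a system of compositions. Then $k$ has a section $\hat k\colon T1\to K$ in $\mathbf{GSet}_n$ (i.e. $k\circ\hat k=\mathrm{id}_{T1}$); in particular $k_m\colon K_m\to(T1)_m$ is surjective for every $0\le m\le n$.
   Context: Fix $n\in\mathbb{N}$. An $n$-globular set $X$ consists of sets $X_0,\dots,X_n$ and functions $s,t\colon X_m\to X_{m-1}$ ($1\le m\le n$) with $s\circ s=s\circ t$ and $t\circ s=t\circ t$; maps commute with $s,t$; $\mathbf{GSet}_n$ is the resulting category. Two $m$-cells are parallel if they have the same source and target. $T$ denotes the free strict $n$-category monad on $\mathbf{GSet}_n$, with unit $\eta^T$ and multiplication $\mu^T$. $1$ denotes the terminal $n$-globular set and $!$ any map to $1$; $T1$ is the free strict $n$-category on $1$; $\mathrm{id}_\alpha$ is the identity cell on $\alpha$. An $n$-globular collection is a map $k\colon K\to T1$ in $\mathbf{GSet}_n$; a map of collections is a map over $T1$. The tensor $K\otimes K'$ of collections $k\colon K\to T1$, $k'\colon K'\to T1$ is the pullback of $k$ along $T!\colon TK'\to T1$, regarded as a collection via $K\otimes K'\to TK'\xrightarrow{Tk'}T^21\xrightarrow{\mu^T_1}T1$; the unit is $\eta^T_1\colon1\to T1$. An $n$-globular operad is a monoid $(K,\eta^K,\mu^K)$ in this monoidal category of collections. Contractions: for a collection $k\colon K\to T1$ and $x\in(T1)_m$ put $K(x)=\{a\in K_m: k(a)=x\}$. For $1\le m\le n$ and $\pi\in(T1)_m$ let $C_K(\pi)=K(s\pi)\times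 K(t\pi)$ if $m=1$, and $C_K(\pi)=\{(a,b)\in K(s\pi)\times K(t\pi): s(a)=s(b),\ t(a)=t(b)\}$ if $m>1$. A contraction $\gamma$ on $K$ consists of, for each $1\le m\le n$ and each $\alpha\in(T1)_{m-1}$, a function $\gamma_{\mathrm{id}_\alpha}\colon C_K(\mathrm{id}_\alpha)\to K(\mathrm{id}_\alpha)$ with $s\gamma_{\mathrm{id}_\alpha}(a,b)=a$ and $t\gamma_{\mathrm{id}_\alpha}(a,b)=b$, such that moreover (tameness) any two parallel $n$-cells $a,b$ of $K$ with $k(a)=k(b)$ are equal. Systems of compositions: for $0\le m\le n$ let $\eta_m\in(T1)_m$ be the image under $\eta^T_1$ of the unique $m$-cell of $1$; put $\beta^m_m=\eta_m$ and $\beta^m_p=\eta_m\circ^m_p\eta_m$ for $0\le p<m$. Let $S\subseteq T1$ be the sub-$n$-globular set with $S_m=\{\beta^m_p:0\le p\le m\}$, a collection via the inclusion, with $\eta^S\colon1\to S$ picking out each $\beta^m_m$. A system of compositions on an operad $K$ is a map of collections $\sigma\colon S\to K$ with $\sigma\circ\eta^S=\eta^K$. *)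

(* Defs.v *)
From Stdlib Require Import List Arith.
Import ListNotations.

(* n-globular sets, encoded as an ambient carrier type together with a
   predicate singling out the actual cells, a dimension function and
   source/target functions (meaningful on cells of positive dimension).
   The set X_m of the paper is {x | gin x /\ gdim x = m}. *)
Record gset := GSet {
  gcar :> Type;
  gin  : gcar -> Prop;
  gdim : gcar -> nat;
  gsrc : gcar -> gcar;
  gtgt : gcar -> gcar }.

Arguments gin {g} _.
Arguments gdim {g} _.
Arguments gsrc {g} _.
Arguments gtgt {g} _.

Definition is_gset (n : nat) (X : gset) : Prop :=
  (forall x : X, gin x -> gdim x <= n) /\
  (forall x : X, gin x -> 0 < gdim x ->
      gin (gsrc x) /\ gin (gtgt x) /\
      gdim (gsrc x) = pred (gdim x) /\ gdim (gtgt x) = pred (gdim x)) /\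
  (forall x : X, gin x -> 1 < gdim x ->
      gsrc (gsrc x) = gsrc (gtgt x) /\ gtgt (gsrc x) = gtgt (gtgt x)).

Definition is_gmap (X Y : gset) (f : X -> Y) : Prop :=
  forall x : X, gin x ->
    gin (f x) /\ gdim (f x) = gdim x /\
    (0 < gdim x -> f (gsrc x) = gsrc (f x) /\ f (gtgt x) = gtgt (f x)).

Definition parallel (X : gset) (x y : X) : Prop :=
  gdim x = gdim y /\ (0 < gdim x -> gsrc x = gsrc y /\ gtgt x = gtgt y).

Definition one (n : nat) : gset :=
  {| gcar := nat; gin := fun m => m <= n; gdim := fun m => m;
     gsrc := pred; gtgt := pred |}.

(* A cell of relative dimension m+1 of the
   free strict category on a globular set, living in a hom at offset j, is
   a sequence  x0 -c1-> x1 -c2-> ... -ck-> xk  where the x_i are j-cells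
   of X and the c_i are cells of relative dimension m in the free strict
   category on the hom globular sets X(x_(i-1), x_i) (offset j+1).  This is
   the standard description T X (x,y) = coproduct over sequences of products
   of T'(X(x_(i-1),x_i)) of the free strict n-category. *)
Inductive rt (A : Type) : Type :=
| Lf : A -> rt A
| Nd : A -> list (rt A * A) -> rt A.
Arguments Lf {A} _.
Arguments Nd {A} _ _.

Section Raw.
Variable X : gset.

Definition inhom (c : rt X) (x y : X) : Prop :=
  match c with
  | Lf b => gsrc b = x /\ gtgt b = y
  | Nd b0 l => (gsrc b0 = x /\ gtgt b0 = y) /\
               Forall (fun p => gsrc (snd p) = x /\ gtgt (snd p) = y) l
  end.

Fixpoint wf (j m : nat) (r : rt X) {struct r} : Prop :=
  match r with
  | Lf a => m = 0 /\ gin a /\ gdim a = j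
  | Nd a0 l =>
      match m with
      | 0 => False
      | S m' =>
          gin a0 /\ gdim a0 = j /\
          (fix wfl (prev : X) (l : list (rt X * X)) : Prop :=
             match l with
             | [] => True
             | (c, x) :: l' =>
                 gin x /\ gdim x = j /\ wf (S j) m' c /\ inhom c prev x /\
                 wfl x l'
             end) a0 l
      end
  end.

End Raw.

Section RawGen.
Variable A : Type.
Fixpoint rsrc (m : nat) (r : rt A) {struct r} : rt A :=
  match r with
  | Lf a => Lf a
  | Nd a0 l =>
      match m with
      | 0 | 1 => Lf a0
      | S m' => Nd a0 (map (fun '(c, x) => (rsrc m' c, x)) l)
      end
  end.

Fixpoint rtgt (m : nat) (r : rt A) {struct r} : rt A :=
  match r with
  | Lf a => Lf a
  | Nd a0 l =>
      match m with
      | 0 | 1 => Lf (last (map snd l) a0)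
      | S m' => Nd a0 (map (fun '(c, x) => (rtgt m' c, x)) l)
      end
  end.

Fixpoint rid (r : rt A) : rt A :=
  match r with
  | Lf a => Nd a []
  | Nd a0 l => Nd a0 (map (fun '(c, x) => (rid c, x)) l)
  end.

(* composition r o_p r' along the p-dimensional boundary (r first) *)
Fixpoint rcomp (p : nat) (r r' : rt A) {struct r} : rt A :=
  match r, r' with
  | Nd a0 l, Nd _ l' =>
      match p with
      | 0 => Nd a0 (l ++ l')
      | S p' =>
          Nd a0 ((fix go (l1 l2 : list (rt A * A)) : list (rt A * A) :=
                    match l1, l2 with
                    | (c, x) :: l1', (c', _) :: l2' => (rcomp p' c c', x) :: go l1' l2'
                    | _, _ => []
                    end) l l')
      end
  | _, _ => r
  end.

End RawGen.

Section RawEta.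
Variable X : gset.
Fixpoint reta (m : nat) (x : X) : rt X :=
  match m with
  | 0 => Lf x
  | S m' => Nd (Nat.iter m gsrc x) [(reta m' x, Nat.iter m gtgt x)]
  end.
End RawEta.

Arguments inhom {X} _ _ _.
Arguments wf {X} _ _ _.
Arguments rsrc {A} _ _.
Arguments rtgt {A} _ _.
Arguments rid {A} _.
Arguments rcomp {A} _ _ _.
Arguments reta {X} _ _.

Fixpoint rmap {A B : Type} (f : A -> B) (r : rt A) : rt B :=
  match r with
  | Lf a => Lf (f a)
  | Nd a0 l => Nd (f a0) (map (fun '(c, x) => (rmap f c, f x)) l)
  end.

Definition T (n : nat) (X : gset) : gset :=
  {| gcar := (nat * rt X)%type;
     gin := fun p => fst p <= n /\ wf 0 (fst p) (snd p);
     gdim := fun p => fst p;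
     gsrc := fun p => (pred (fst p), rsrc (fst p) (snd p));
     gtgt := fun p => (pred (fst p), rtgt (fst p) (snd p)) |}.

Definition Tmap (n : nat) (X Y : gset) (f : X -> Y) : T n X -> T n Y :=
  fun p => (fst p, rmap f (snd p)).

Definition etaT (n : nat) (X : gset) : X -> T n X :=
  fun x => (gdim x, reta (gdim x) x).

Fixpoint rflat {A : Type} (j m : nat) (R : rt (nat * rt A)) {struct R} : rt A :=
  match R with
  | Lf u => snd u
  | Nd u0 l =>
      match map (fun '(c, _) => rflat (S j) (pred m) c) l with
      | [] => Nat.iter m rid (snd u0)
      | c1 :: cs => fold_left (rcomp j) cs c1
      end
  end.

Definition muT (n : nat) (X : gset) : T n (T n X) -> T n X :=
  fun p => (fst p, rflat 0 (fst p) (snd p)).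

Definition idT (n : nat) (X : gset) (p : T n X) : T n X :=
  (S (fst p), rid (snd p)).
Definition compT (n : nat) (X : gset) (q : nat) (p p' : T n X) : T n X :=
  (fst p, rcomp q (snd p) (snd p')).

Definition T1 (n : nat) : gset := T n (one n).

Definition bang (X : gset) : X -> nat := fun x => gdim x.

(* Collections and their tensor.  K (x) K' is the pullback of
   k : K -> T1 along T! : T K' -> T1; its structure map is
   mu^T_1 o T k' o pr2 (see [tensor_map]). *)
Definition tensor (n : nat) (K : gset) (k : K -> T1 n) (K' : gset) : gset :=
  {| gcar := (gcar K * gcar (T n K'))%type;
     gin := fun ab => gin (fst ab) /\ gin (snd ab) /\
                      k (fst ab) = Tmap n K' (one n) (bang K') (snd ab);
     gdim := fun ab => gdim (fst ab);
     gsrc := fun ab => (gsrc (fst ab), gsrc (snd ab));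
     gtgt := fun ab => (gtgt (fst ab), gtgt (snd ab)) |}.

Definition tensor_map (n : nat) (K : gset) (k : K -> T1 n) (K' : gset)
  (k' : K' -> T1 n) : tensor n K k K' -> T1 n :=
  fun ab => muT n (one n) (Tmap n K' (T1 n) k' (snd ab)).

Definition is_operad (n : nat) (K : gset) (k : K -> T1 n)
  (etaK : one n -> K) (muK : tensor n K k K -> K) : Prop :=
  is_gset n K /\ is_gmap K (T1 n) k /\
  is_gmap (one n) K etaK /\
  (forall m : one n, gin m -> k (etaK m) = etaT n (one n) m) /\
  is_gmap (tensor n K k K) K muK /\
  (forall ab : tensor n K k K, gin ab -> k (muK ab) = tensor_map n K k K k ab) /\
  (forall a : K, gin a -> muK (etaK (gdim a), etaT n K a) = a) /\
  (forall a : K, gin a -> muK (a, Tmap n (one n) K etaK (k a)) = a) /\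
  (* associativity  mu o (id (x) mu) = mu o (mu (x) id) o alpha, where the
     associator alpha : K (x) (K (x) K) -> (K (x) K) (x) K sends (a, D) to
     ((a, T pr1 D), mu^T_K (T pr2 D)) *)
  (forall aD : tensor n K k (tensor n K k K), gin aD ->
     muK (fst aD, Tmap n (tensor n K k K) K muK (snd aD)) =
     muK (muK (fst aD, Tmap n (tensor n K k K) K fst (snd aD)),
          muT n K (Tmap n (tensor n K k K) (T n K) snd (snd aD)))).

(* Contractions: gamma alpha a b = gamma_{id_alpha}(a, b). *)
Definition is_contraction (n : nat) (K : gset) (k : K -> T1 n)
  (gamma : T1 n -> K -> K -> K) : Prop :=
  (forall (alpha : T1 n), gin alpha -> gdim alpha < n ->
     forall a b : K, gin a -> gin b ->
       k a = gsrc (idT n (one n) alpha) -> k b = gtgt (idT n (one n) alpha) ->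
       (0 < gdim alpha -> gsrc a = gsrc b /\ gtgt a = gtgt b) ->
       gin (gamma alpha a b) /\ k (gamma alpha a b) = idT n (one n) alpha /\
       gsrc (gamma alpha a b) = a /\ gtgt (gamma alpha a b) = b) /\
  (forall a b : K, gin a -> gin b -> gdim a = n -> gdim b = n ->
     parallel K a b -> k a = k b -> a = b).

Definition etaT1 (n m : nat) : T1 n := etaT n (one n) m.

Definition beta (n m p : nat) : T1 n :=
  if Nat.eqb p m then etaT1 n m
  else compT n (one n) p (etaT1 n m) (etaT1 n m).

Definition inS (n : nat) (c : T1 n) : Prop :=
  exists m p, m <= n /\ p <= m /\ c = beta n m p.

(* sigma : S -> K is a map of collections with sigma o eta^S = eta^K
   (sigma is given as a function on T1 of which only the restriction to
   S matters) *)
Definition is_syscomp (n : nat) (K : gset) (k : K -> T1 n)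
  (etaK : one n -> K) (sigma : T1 n -> K) : Prop :=
  (forall c, inS n c ->
     gin (sigma c) /\ gdim (sigma c) = gdim c /\ k (sigma c) = c /\
     (0 < gdim c -> sigma (gsrc c) = gsrc (sigma c) /\
                    sigma (gtgt c) = gtgt (sigma c))) /\
  (forall m, m <= n -> sigma (etaT1 n m) = etaK m).

(* Main.v *)
Require Import Defs.
From Stdlib Require Import List Arith Lia.
Import ListNotations.

Fixpoint wrg {A} (f : nat -> A) (i c : nat) (r : rt A) {struct c} : rt A :=
  match c with 0 => r | S c' => Nd (f i) [(wrg f (S i) c' r, f i)] end.

Lemma rmap_wrg {A B} (h : A -> B) f c : forall i r,
  rmap h (wrg f i c r) = wrg (fun q => h (f q)) i c (rmap h r).
Proof. induction c; intros; simpl; try rewrite IHc; auto. Qed.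

Lemma wrg_ext {A} (f f' : nat -> A) c : forall i r,
  (forall q, q < i + c -> f q = f' q) -> wrg f i c r = wrg f' i c r.
Proof. induction c; intros; simpl; auto. rewrite H by lia. rewrite IHc; auto.
  intros; apply H; lia. Qed.

Lemma wrg_add {A} (f : nat -> A) a : forall b i r,
  wrg f i (a + b) r = wrg f i a (wrg f (i + a) b r).
Proof. induction a; intros; simpl. rewrite Nat.add_0_r; reflexivity.
  rewrite IHa. replace (S i + a) with (i + S a) by lia. reflexivity. Qed.

Lemma wrg_succ {A} (f : nat -> A) c i r :
  wrg f i (S c) r = wrg f i c (Nd (f (i + c)) [(r, f (i + c))]).
Proof. replace (S c) with (c + 1) by lia. rewrite wrg_add. reflexivity. Qed.

Lemma rcomp_wrg {A} (f : nat -> A) c : forall i (a b : rt A),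
  rcomp c (wrg f i c a) (wrg f i c b) = wrg f i c (rcomp 0 a b).
Proof. induction c; intros; simpl. reflexivity. rewrite IHc. reflexivity. Qed.

Lemma rid_wrg {A} (f : nat -> A) c : forall i (r : rt A),
  rid (wrg f i c r) = wrg f i c (rid r).
Proof. induction c; intros; simpl; try rewrite IHc; auto. Qed.

Lemma rsrc_wrg {A} (f : nat -> A) c : forall i M r, 0 < M ->
  rsrc (c + M) (wrg f i c r) = wrg f i c (rsrc M r).
Proof. induction c; intros; simpl. reflexivity.
  destruct (c + M) eqn:E. lia. simpl. rewrite <- E, IHc; auto. Qed.

Lemma rtgt_wrg {A} (f : nat -> A) c : forall i M r, 0 < M ->
  rtgt (c + M) (wrg f i c r) = wrg f i c (rtgt M r).
Proof. induction c; intros; simpl. reflexivity.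
  destruct (c + M) eqn:E. lia. simpl. rewrite <- E, IHc; auto. Qed.

Lemma rflat_wrg {A} (f : nat -> nat * rt A) c : forall i M R,
  rflat i (c + M) (wrg f i c R) = rflat (i + c) M R.
Proof. induction c; intros; simpl. rewrite Nat.add_0_r; reflexivity.
  rewrite IHc. replace (S i + c) with (i + S c) by lia. reflexivity. Qed.

Lemma rflat_reta {A} (X : gset) (h : X -> nat * rt A) c : forall j x,
  rflat j c (rmap h (reta c x)) = snd (h x).
Proof. induction c; intros; simpl; auto. Qed.

Lemma wf_wrg (X : gset) (f : nat -> X) c : forall i M r,
  (forall q, q < i + c -> gin (f q) /\ gdim (f q) = q) ->
  (forall q, S q < i + c -> gsrc (f (S q)) = f q /\ gtgt (f (S q)) = f q) ->
  wf (i + c) M r ->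
  (0 < c -> inhom r (f (pred (i + c))) (f (pred (i + c)))) ->
  wf i (c + M) (wrg f i c r).
Proof. induction c; intros i M r H1 H2 H3 H4.
  - rewrite Nat.add_0_r in H3; exact H3.
  - simpl. destruct (H1 i) as [G1 G2]; [lia|].
    repeat split; auto.
    + apply IHc; try (intros; first [apply H1 | apply H2]; lia).
      replace (S i + c) with (i + S c) by lia; auto.
      intros; replace (pred (S i + c)) with (pred (i + S c)) by lia; apply H4; lia.
    + destruct c; simpl.
      * replace (pred (i + 1)) with i in H4 by lia. apply H4; lia.
      * destruct (H2 i) as [E1 E2]; [lia|]. repeat split; auto;
        repeat constructor; simpl; auto.
Qed.

Fixpoint rt_ind2 (A : Type) (P : rt A -> Prop) (HL : forall a, P (Lf a))
  (HN : forall a l, Forall (fun pr => P (fst pr)) l -> P (Nd a l)) (r : rt A) : P r :=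
  match r with
  | Lf a => HL a
  | Nd a l => HN a l ((fix F (l : list (rt A * A)) : Forall (fun pr => P (fst pr)) l :=
        match l with
        | [] => Forall_nil _
        | (c, x) :: l' => @Forall_cons _ (fun pr => P (fst pr)) (c, x) l' (rt_ind2 A P HL HN c) (F l')
        end) l)
  end.

Lemma iter_pred c : forall i, Nat.iter c pred (i + c) = i.
Proof. induction c; intros; simpl. lia. replace (i + S c) with (S i + c) by lia.
  rewrite IHc. reflexivity. Qed.

Lemma reta_one n c : forall i, @reta (one n) c (i + c) = wrg (fun q => q) i c (Lf (i + c)).
Proof. induction c; intros; simpl. reflexivity.
  replace (i + S c) with (S i + c) by lia. rewrite IHc, (iter_pred c (S i)). reflexivity. Qed.

Lemma rsrc_wrgL {A} (f : nat -> A) c i a :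
  rsrc (S c) (wrg f i (S c) (Lf a)) = wrg f i c (Lf (f (i + c))).
Proof. rewrite wrg_succ. replace (S c) with (c + 1) by lia. rewrite rsrc_wrg by lia. reflexivity. Qed.
Lemma rtgt_wrgL {A} (f : nat -> A) c i a :
  rtgt (S c) (wrg f i (S c) (Lf a)) = wrg f i c (Lf (f (i + c))).
Proof. rewrite wrg_succ. replace (S c) with (c + 1) by lia. rewrite rtgt_wrg by lia. reflexivity. Qed.
Lemma rsrc_Nd2 {A} c (a b d : A) u v :
  rsrc (S (S c)) (Nd a [(u,b);(v,d)]) = Nd a [(rsrc (S c) u, b); (rsrc (S c) v, d)].
Proof. reflexivity. Qed.
Lemma rtgt_Nd2 {A} c (a b d : A) u v :
  rtgt (S (S c)) (Nd a [(u,b);(v,d)]) = Nd a [(rtgt (S c) u, b); (rtgt (S c) v, d)].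
Proof. reflexivity. Qed.


Section Main.
Variables (n : nat) (K : gset) (k : K -> T1 n) (etaK : one n -> K)
  (muK : tensor n K k K -> K) (gamma : T1 n -> K -> K -> K) (sigma : T1 n -> K).
Hypothesis Hop : is_operad n K k etaK muK.
Hypothesis Hc : is_contraction n K k gamma.
Hypothesis Hs : is_syscomp n K k etaK sigma.

Lemma Kgs : is_gset n K. Proof. apply Hop. Qed.
Lemma kmap : is_gmap K (T1 n) k. Proof. apply Hop. Qed.

Lemma etaK_ok q : q <= n -> gin (etaK q) /\ gdim (etaK q) = q /\ k (etaK q) = (q, wrg (fun i => i) 0 q (Lf q)).
Proof. intros Hq. destruct Hop as (_ & _ & He & Hk & _).
  destruct (He q Hq) as (A1 & A2 & _). repeat split; auto.
  rewrite Hk by exact Hq. unfold etaT. simpl. f_equal. apply (reta_one n q 0). Qed.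

Lemma etaK_bd q : S q <= n -> gsrc (etaK (S q)) = etaK q /\ gtgt (etaK (S q)) = etaK q.
Proof. intros Hq. destruct Hop as (_ & _ & He & _).
  destruct (He (S q) Hq) as (_ & _ & A3). destruct A3 as [A B]; simpl; [lia|].
  simpl in A, B. auto. Qed.

Lemma iter_in c : forall x : K, gin x -> c <= gdim x ->
  gin (Nat.iter c gsrc x) /\ gdim (Nat.iter c gsrc x) = gdim x - c /\
  gin (Nat.iter c gtgt x) /\ gdim (Nat.iter c gtgt x) = gdim x - c.
Proof. destruct Kgs as (_ & G2 & _).
  induction c; intros x Hx Hd; simpl. rewrite Nat.sub_0_r; auto.
  destruct (IHc x Hx) as (A1 & A2 & A3 & A4); [lia|].
  destruct (G2 _ A1) as (B1 & _ & B3 & _); [lia|].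
  destruct (G2 _ A3) as (_ & C1 & _ & C3); [lia|]. repeat split; auto; lia. Qed.

Lemma glob2 a : forall x : K, gin x -> 1 <= a -> S a <= gdim x ->
  Nat.iter a gtgt (gsrc x) = Nat.iter (S a) gtgt x /\
  Nat.iter a gsrc (gtgt x) = Nat.iter (S a) gsrc x.
Proof. destruct Kgs as (_ & _ & G3).
  induction a; intros x Hx H1 H2. lia.
  destruct a. simpl. destruct (G3 x Hx) as [E1 E2]; [lia|]. auto.
  destruct (IHa x Hx) as [E1 E2]; [lia|lia|].
  change (Nat.iter (S (S a)) gtgt (gsrc x)) with (gtgt (Nat.iter (S a) gtgt (gsrc x))).
  change (Nat.iter (S (S a)) gsrc (gtgt x)) with (gsrc (Nat.iter (S a) gsrc (gtgt x))).
  rewrite E1, E2. auto. Qed.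

Lemma glob1 c : forall x : K, gin x -> 1 <= c -> S c <= gdim x ->
  gtgt (Nat.iter c gsrc x) = Nat.iter (S c) gtgt x /\
  gsrc (Nat.iter c gtgt x) = Nat.iter (S c) gsrc x.
Proof. destruct Kgs as (_ & _ & G3).
  induction c; intros x Hx H1 H2. lia.
  destruct (iter_in c x Hx) as (A1 & A2 & A3 & A4); [lia|].
  simpl. destruct (G3 _ A1) as [_ E1]; [lia|]. destruct (G3 _ A3) as [E2 _]; [lia|].
  rewrite E1, <- E2.
  destruct c. simpl. destruct (G3 x Hx) as [F1 F2]; [lia|]. auto.
  destruct (IHc x Hx) as [F1 F2]; [lia|lia|]. rewrite F1, F2. auto. Qed.

Lemma wf_reta c : forall i (x : K), gin x -> gdim x = i + c -> wf i c (reta c x).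
Proof. induction c; intros i x Hx Hd; simpl.
  - repeat split; auto; lia.
  - destruct (iter_in (S c) x Hx) as (A1 & A2 & A3 & A4); [lia|].
    simpl in A1, A2, A3, A4. repeat split; auto; try lia.
    + apply IHc; auto; lia.
    + destruct c; simpl; auto.
      assert (HH : 1 <= S c /\ S (S c) <= gdim x) by lia. destruct HH as [HH1 HH2].
      destruct (glob1 (S c) x Hx HH1 HH2) as [E1 E2]. simpl in E1, E2.
      repeat split; auto; repeat constructor; simpl; auto.
Qed.

Lemma rmap_reta c : forall i (x : K), gin x -> gdim x = i + c ->
  rmap (fun z => gdim z) (reta c x) = wrg (fun q => q) i c (Lf (i + c)).
Proof. induction c; intros i x Hx Hd; simpl.
  - rewrite Hd; reflexivity.
  - destruct (iter_in (S c) x Hx) as (A1 & A2 & A3 & A4); [lia|].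
    simpl in A1, A2, A3, A4. rewrite A2, A4, (IHc (S i)) by (auto; lia).
    replace (gdim x - S c) with i by lia. replace (S i + c) with (i + S c) by lia.
    reflexivity. Qed.

Lemma rsrc_reta c : forall x : K, gin x -> S c <= gdim x ->
  rsrc (S c) (reta (S c) x) = reta c (gsrc x) /\ rtgt (S c) (reta (S c) x) = reta c (gtgt x).
Proof. induction c; intros x Hx Hd. simpl. auto.
  destruct (IHc x Hx) as [E1 E2]; [lia|].
  change (reta (S (S c)) x) with (Nd (Nat.iter (S (S c)) gsrc x) [(reta (S c) x, Nat.iter (S (S c)) gtgt x)]).
  destruct (glob2 (S c) x Hx) as [F1 F2]; [lia|lia|].
  split.
  - change (rsrc (S (S c)) (Nd (Nat.iter (S (S c)) gsrc x) [(reta (S c) x, Nat.iter (S (S c)) gtgt x)]))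
      with (Nd (Nat.iter (S (S c)) gsrc x) [(rsrc (S c) (reta (S c) x), Nat.iter (S (S c)) gtgt x)]).
    rewrite E1. change (reta (S c) (gsrc x)) with (Nd (Nat.iter (S c) gsrc (gsrc x)) [(reta c (gsrc x), Nat.iter (S c) gtgt (gsrc x))]).
    rewrite F1, <- Nat.iter_succ_r. reflexivity.
  - change (rtgt (S (S c)) (Nd (Nat.iter (S (S c)) gsrc x) [(reta (S c) x, Nat.iter (S (S c)) gtgt x)]))
      with (Nd (Nat.iter (S (S c)) gsrc x) [(rtgt (S c) (reta (S c) x), Nat.iter (S (S c)) gtgt x)]).
    rewrite E2. change (reta (S c) (gtgt x)) with (Nd (Nat.iter (S c) gsrc (gtgt x)) [(reta c (gtgt x), Nat.iter (S c) gtgt (gtgt x))]).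
    rewrite F2, <- Nat.iter_succ_r. reflexivity.
Qed.

Lemma iter_etaK c : forall i, i + c <= n ->
  Nat.iter c gsrc (etaK (i + c)) = etaK i /\ Nat.iter c gtgt (etaK (i + c)) = etaK i.
Proof. induction c; intros i H; simpl. rewrite Nat.add_0_r; auto.
  replace (i + S c) with (S i + c) by lia. destruct (IHc (S i)) as [E1 E2]; [lia|].
  rewrite E1, E2. apply etaK_bd; lia. Qed.

Lemma reta_etaK c : forall i, i + c <= n ->
  reta c (etaK (i + c)) = wrg etaK i c (Lf (etaK (i + c))).
Proof. induction c; intros i H. reflexivity.
  change (reta (S c) (etaK (i + S c))) with
    (Nd (Nat.iter (S c) gsrc (etaK (i + S c))) [(reta c (etaK (i + S c)), Nat.iter (S c) gtgt (etaK (i + S c)))]).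
  destruct (iter_etaK (S c) i H) as [E1 E2]. rewrite E1, E2.
  replace (i + S c) with (S i + c) by lia. rewrite IHc by lia. reflexivity. Qed.


Definition idn (q : nat) : nat := q.

Lemma beta_eq p c : beta n (p + S c) p =
  (p + S c, wrg idn 0 p (Nd p [(wrg idn (S p) c (Lf (S p + c)), p);
                                (wrg idn (S p) c (Lf (S p + c)), p)])).
Proof. unfold beta. replace (Nat.eqb p (p + S c)) with false
  by (symmetry; apply Nat.eqb_neq; lia).
  unfold compT, etaT1, etaT. simpl.
  pose proof (reta_one n (p + S c) 0) as E. simpl in E. rewrite E.
  pose proof (wrg_add (fun q : nat => q) p (S c) 0 (Lf (p + S c))) as E2. simpl in E2.
  rewrite E2, rcomp_wrg. simpl. replace (p + S c) with (S (p + c)) by lia. reflexivity. Qed.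

Lemma beta_src0 p : gsrc (beta n (p + 1) p) = etaT1 n p /\ gtgt (beta n (p + 1) p) = etaT1 n p.
Proof. rewrite beta_eq. unfold etaT1, etaT. simpl.
  pose proof (reta_one n p 0) as E. simpl in E. rewrite E.
  rewrite (rsrc_wrg idn p 0 1), (rtgt_wrg idn p 0 1) by lia. simpl.
  replace (p + 1) with (S p) by lia. simpl. split; reflexivity. Qed.

Lemma beta_srcS p c : gsrc (beta n (p + S (S c)) p) = beta n (p + S c) p /\
   gtgt (beta n (p + S (S c)) p) = beta n (p + S c) p.
Proof. rewrite !beta_eq. unfold gsrc, gtgt, T1, T.
  cbn [fst snd]. rewrite (rsrc_wrg idn p 0 (S (S c))), (rtgt_wrg idn p 0 (S (S c))) by lia.
  replace (pred (p + S (S c))) with (p + S c) by lia.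
  rewrite rsrc_Nd2, rtgt_Nd2, rsrc_wrgL, rtgt_wrgL.
  unfold idn at 3 6 9 12. replace (S p + c) with (p + S c) by lia.
  replace (S p + S c) with (S (p + S c)) by lia. split; reflexivity. Qed.


Definition Dc p c (x y : K) : T n K :=
  (p + S c, wrg etaK 0 p (Nd (etaK p) [(reta c x, etaK p); (reta c y, etaK p)])).
Definition comp p c (x y : K) : K := muK (sigma (beta n (p + S c) p), Dc p c x y).
Definition Cmp p c (x y : K) : Prop :=
  gin x /\ gin y /\ gdim x = p + S c /\ gdim y = p + S c /\ p + S c <= n /\
  Nat.iter (S c) gsrc x = etaK p /\ Nat.iter (S c) gtgt x = etaK p /\
  Nat.iter (S c) gsrc y = etaK p /\ Nat.iter (S c) gtgt y = etaK p.

Lemma sig_beta p c : p + S c <= n ->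
  gin (sigma (beta n (p + S c) p)) /\ gdim (sigma (beta n (p + S c) p)) = p + S c /\
  k (sigma (beta n (p + S c) p)) = beta n (p + S c) p /\
  sigma (gsrc (beta n (p + S c) p)) = gsrc (sigma (beta n (p + S c) p)) /\
  sigma (gtgt (beta n (p + S c) p)) = gtgt (sigma (beta n (p + S c) p)).
Proof. intros H. destruct Hs as [S1 _].
  assert (HS : inS n (beta n (p + S c) p)) by (exists (p + S c), p; repeat split; lia).
  destruct (S1 _ HS) as (A1 & A2 & A3 & A4).
  assert (Hd : gdim (beta n (p + S c) p) = p + S c) by (rewrite beta_eq; reflexivity).
  rewrite Hd in A2, A4. destruct A4 as [A4 A5]; [lia|]. auto. Qed.

Lemma inhom_reta p c (x : K) : gin x -> gdim x = p + S c ->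
  Nat.iter (S c) gsrc x = etaK p -> Nat.iter (S c) gtgt x = etaK p ->
  inhom (reta c x) (etaK p) (etaK p).
Proof. intros Hx Hd E1 E2. destruct c; simpl in *; auto.
  assert (HH : 1 <= S c /\ S (S c) <= gdim x) by lia. destruct HH as [HH1 HH2].
  destruct (glob1 (S c) x Hx HH1 HH2) as [F1 F2]. simpl in F1, F2.
  rewrite F1. repeat split; auto; repeat constructor; simpl; try rewrite F2; auto. Qed.

Lemma tens_in p c x y : Cmp p c x y ->
  @gin (tensor n K k K) (sigma (beta n (p + S c) p), Dc p c x y).
Proof. intros (Hx & Hy & Dx & Dy & Hn & Sx & Tx & Sy & Ty).
  destruct (sig_beta p c Hn) as (B1 & B2 & B3 & B4 & B5).
  split; [exact B1|]. split.
  - split; [simpl; lia|]. simpl fst; simpl snd.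
    apply (wf_wrg K etaK p 0 (S c)).
    + intros q Hq. destruct (etaK_ok q) as (? & ? & _); [lia|]. auto.
    + intros q Hq. apply etaK_bd. lia.
    + simpl. destruct (etaK_ok p) as (E1 & E2 & _); [lia|].
      repeat split; auto.
      * apply wf_reta; auto; lia.
      * apply inhom_reta; auto.
      * apply wf_reta; auto; lia.
      * apply inhom_reta; auto.
    + intros Hp. simpl. destruct p; [lia|]. destruct (etaK_bd p) as [E1 E2]; [lia|].
      simpl. rewrite E1, E2. repeat split; auto; repeat constructor; simpl; auto.
  - cbn [fst snd]. rewrite B3, beta_eq. unfold Tmap, Dc. cbn [fst snd].
    rewrite rmap_wrg. apply (f_equal2 pair); [reflexivity|]. symmetry.
    rewrite (wrg_ext (fun q => bang K (etaK q)) idn p 0).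
    + unfold bang. simpl.
      destruct (etaK_ok p) as (E1 & E2 & _); [lia|]. rewrite E2.
      rewrite !(rmap_reta c (S p)) by (auto; lia). reflexivity.
    + intros q Hq. unfold bang. destruct (etaK_ok q) as (? & ? & _); [lia|]. auto.
Qed.


Lemma muK_ok (ab : tensor n K k K) : gin ab ->
  gin (muK ab) /\ gdim (muK ab) = gdim ab /\ k (muK ab) = tensor_map n K k K k ab /\
  (0 < gdim ab -> muK (gsrc ab) = gsrc (muK ab) /\ muK (gtgt ab) = gtgt (muK ab)).
Proof. intros H. destruct Hop as (_ & _ & _ & _ & Hm & Hk & _).
  destruct (Hm ab H) as (A1 & A2 & A3). auto. Qed.

Lemma comp_ok p c x y : Cmp p c x y ->
  gin (comp p c x y) /\ gdim (comp p c x y) = p + S c /\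
  k (comp p c x y) = (p + S c, rcomp p (snd (k x)) (snd (k y))).
Proof. intros H. pose proof (tens_in p c x y H) as T.
  destruct (muK_ok _ T) as (A1 & A2 & A3 & _).
  destruct H as (Hx & Hy & Dx & Dy & Hn & _).
  destruct (sig_beta p c Hn) as (B1 & B2 & _).
  unfold comp. split; [auto|]. split. rewrite A2. exact B2.
  rewrite A3. unfold tensor_map, muT, Tmap, Dc. cbn [fst snd].
  apply (f_equal2 pair); [reflexivity|].
  rewrite rmap_wrg. pose proof (@rflat_wrg nat (fun q => k (etaK q)) p 0 (S c)) as RF. simpl in RF. rewrite RF. simpl.
  rewrite !rflat_reta. reflexivity. Qed.

Lemma comp_bd0 p x y : Cmp p 0 x y ->
  gsrc (comp p 0 x y) = etaK p /\ gtgt (comp p 0 x y) = etaK p.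
Proof. intros H. pose proof (tens_in p 0 x y H) as T.
  destruct (muK_ok _ T) as (A1 & A2 & A3 & A4).
  destruct H as (Hx & Hy & Dx & Dy & Hn & _).
  destruct (sig_beta p 0 Hn) as (B1 & B2 & B3 & B4 & B5).
  destruct A4 as [A4 A5]. simpl; lia.
  unfold comp. rewrite <- A4, <- A5. simpl gsrc; simpl gtgt.
  rewrite <- B4, <- B5. replace (p + 1) with (p + 1) by reflexivity.
  destruct (beta_src0 p) as [C1 C2]. rewrite C1, C2.
  destruct Hs as [_ S2]. rewrite S2 by lia.
  unfold Dc. cbn [fst snd].
  rewrite (rsrc_wrg etaK p 0 1), (rtgt_wrg etaK p 0 1) by lia. simpl.
  replace (pred (p + 1)) with p by lia.
  destruct Hop as (_ & _ & _ & _ & _ & _ & LU & _).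
  destruct (etaK_ok p) as (E1 & E2 & _); [lia|].
  pose proof (LU (etaK p) E1) as L. rewrite E2 in L. unfold etaT in L.
  rewrite E2 in L. pose proof (reta_etaK p 0) as R. simpl in R. rewrite R in L by lia.
  split; exact L. Qed.


Lemma Cmp_bd p c x y : Cmp p (S c) x y ->
  Cmp p c (gsrc x) (gsrc y) /\ Cmp p c (gtgt x) (gtgt y).
Proof. intros (Hx & Hy & Dx & Dy & Hn & Sx & Tx & Sy & Ty).
  destruct (iter_in 1 x Hx) as (X1 & X2 & X3 & X4); [lia|].
  destruct (iter_in 1 y Hy) as (Y1 & Y2 & Y3 & Y4); [lia|].
  simpl in X1, X2, X3, X4, Y1, Y2, Y3, Y4.
  assert (HH : 1 <= S c) by lia.
  destruct (glob2 (S c) x Hx HH) as [GX1 GX2]; [lia|].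
  destruct (glob2 (S c) y Hy HH) as [GY1 GY2]; [lia|].
  unfold Cmp. repeat split; auto; try lia;
  first [ rewrite GX1 | rewrite GX2 | rewrite GY1 | rewrite GY2 | rewrite <- Nat.iter_succ_r ]; auto. Qed.

Lemma comp_bdS p c x y : Cmp p (S c) x y ->
  gsrc (comp p (S c) x y) = comp p c (gsrc x) (gsrc y) /\
  gtgt (comp p (S c) x y) = comp p c (gtgt x) (gtgt y).
Proof. intros H. pose proof (tens_in p (S c) x y H) as T.
  destruct (muK_ok _ T) as (A1 & A2 & A3 & A4).
  destruct H as (Hx & Hy & Dx & Dy & Hn & _).
  destruct (sig_beta p (S c) Hn) as (B1 & B2 & B3 & B4 & B5).
  destruct A4 as [A4 A5]. simpl; lia.
  unfold comp. rewrite <- A4, <- A5. cbn [gsrc gtgt tensor Defs.T fst snd].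
  rewrite <- B4, <- B5.
  destruct (beta_srcS p c) as [C1 C2]. rewrite C1, C2.
  unfold Dc. cbn [fst snd].
  rewrite (rsrc_wrg etaK p 0 (S (S c))), (rtgt_wrg etaK p 0 (S (S c))) by lia.
  rewrite rsrc_Nd2, rtgt_Nd2.
  destruct (rsrc_reta c x Hx) as [R1 R2]; [lia|].
  destruct (rsrc_reta c y Hy) as [R3 R4]; [lia|].
  rewrite R1, R2, R3, R4.
  replace (pred (p + S (S c))) with (p + S c) by lia. split; reflexivity. Qed.

Lemma comp_bd p c : forall x y, Cmp p c x y ->
  Nat.iter (S c) gsrc (comp p c x y) = etaK p /\ Nat.iter (S c) gtgt (comp p c x y) = etaK p.
Proof. induction c; intros x y H.
  - apply comp_bd0 in H. simpl. destruct H as [-> ->]. auto.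
  - destruct (Cmp_bd p c x y H) as [H1 H2]. destruct (comp_bdS p c x y H) as [E1 E2].
    split; rewrite Nat.iter_succ_r; [rewrite E1 | rewrite E2]; apply IHc; auto. Qed.


Definition idtr (j m : nat) : rt nat := match m with 0 => Lf j | S _ => Nd j [] end.

Fixpoint idcell (j m : nat) : K :=
  match m with
  | 0 => etaK j
  | S m' => gamma ((j + m', wrg idn 0 j (idtr j m')) : T1 n) (idcell j m') (idcell j m')
  end.

Lemma kdim (a : K) : gin a -> gdim a = fst (k a).
Proof. intros H. destruct (kmap a H) as (_ & E & _). rewrite <- E. reflexivity. Qed.

Lemma idcell_ok m : forall j, j + m <= n ->
  gin (idcell j m) /\ gdim (idcell j m) = j + m /\
  k (idcell j m) = (j + m, wrg idn 0 j (idtr j m)) /\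
  Nat.iter m gsrc (idcell j m) = etaK j /\ Nat.iter m gtgt (idcell j m) = etaK j /\
  (0 < m -> gsrc (idcell j m) = idcell j (pred m) /\ gtgt (idcell j m) = idcell j (pred m)).
Proof. induction m; intros j Hj.
  - destruct (etaK_ok j) as (E1 & E2 & E3); [lia|]. simpl.
    rewrite Nat.add_0_r. repeat split; auto; try lia.
  - destruct (IHm j) as (A1 & A2 & A3 & A4 & A5 & _); [lia|].
    destruct Hc as [C _].
    set (alpha := ((j + m, wrg idn 0 j (idtr j m)) : T1 n)).
    assert (Hal : gin alpha).
    { split; [simpl; lia|]. simpl.
      apply (wf_wrg (one n) idn j 0 m).
      - intros q Hq; simpl; unfold idn; lia.
      - intros q Hq; simpl; unfold idn; auto.
      - destruct m; simpl; unfold idn; lia.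
      - intros _. destruct m; simpl; unfold idn; auto. }
    assert (Hsrc : gsrc (idT n (one n) alpha) = alpha /\ gtgt (idT n (one n) alpha) = alpha).
    { unfold alpha, idT. cbn [gsrc gtgt Defs.T T1 fst snd]. rewrite rid_wrg.
      replace (S (j + m)) with (j + S m) by lia.
      rewrite (rsrc_wrg idn j 0 (S m)), (rtgt_wrg idn j 0 (S m)) by lia.
      replace (pred (j + S m)) with (j + m) by lia.
      destruct m; split; reflexivity. }
    destruct Hsrc as [Hs1 Hs2].
    destruct (C alpha Hal) with (a := idcell j m) (b := idcell j m) as (G1 & G2 & G3 & G4);
      auto; try (simpl; lia); try (rewrite A3, Hs1; reflexivity);
      try (rewrite A3, Hs2; reflexivity).
    simpl idcell. fold alpha.
    assert (Gk : k (gamma alpha (idcell j m) (idcell j m)) = (j + S m, wrg idn 0 j (idtr j (S m)))).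
    { rewrite G2. unfold idT, alpha. cbn [fst snd]. rewrite rid_wrg.
      replace (S (j + m)) with (j + S m) by lia. destruct m; reflexivity. }
    repeat split; auto.
    + rewrite kdim, Gk by exact G1. reflexivity.
    + rewrite Nat.iter_succ_r, G3. exact A4.
    + rewrite Nat.iter_succ_r, G4. exact A5.
Qed.


Fixpoint g (j m : nat) (r : rt nat) {struct r} : K :=
  match r with
  | Lf _ => etaK j
  | Nd _ l =>
      (fix gl (l : list (rt nat * nat)) : K :=
         match l with
         | [] => idcell j m
         | (d, _) :: l' =>
             match l' with
             | [] => g (S j) (pred m) d
             | _ :: _ => comp j (pred m) (g (S j) (pred m) d) (gl l')
             end
         end) l
  end.

Definition Pg (r : rt nat) : Prop := forall j m, @wf (one n) j m r -> j + m <= n ->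
  gin (g j m r) /\ gdim (g j m r) = j + m /\ k (g j m r) = (j + m, wrg idn 0 j r) /\
  Nat.iter m gsrc (g j m r) = etaK j /\ Nat.iter m gtgt (g j m r) = etaK j /\
  (0 < m -> gsrc (g j m r) = g j (pred m) (rsrc m r) /\ gtgt (g j m r) = g j (pred m) (rtgt m r)).

Lemma Pg_all : forall r, Pg r.
Proof. apply rt_ind2.
  - intros a j m Hwf Hn. simpl in Hwf. destruct Hwf as (-> & Ha & ->).
    destruct (etaK_ok j) as (E1 & E2 & E3); [lia|].
    change (g j 0 (Lf j)) with (etaK j). rewrite Nat.add_0_r.
    repeat split; auto; try lia.
  - intros a l HF j m Hwf Hn. destruct m as [|m']; [simpl in Hwf; contradiction|].
    revert Hwf. induction l as [|[d x] l IHl]; intros Hwf.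
    + simpl in Hwf. destruct Hwf as (Ha & -> & _).
      change (g j (S m') (Nd j [])) with (idcell j (S m')).
      destruct (idcell_ok (S m') j Hn) as (A1 & A2 & A3 & A4 & A5 & A6).
      repeat split; auto.
      * destruct (A6 ltac:(lia)) as [B1 _]. rewrite B1. destruct m'; reflexivity.
      * destruct (A6 ltac:(lia)) as [_ B2]. rewrite B2. destruct m'; reflexivity.
    + inversion HF as [|? ? Hd HF']; subst. simpl fst in Hd.
      destruct Hwf as (Ha & Haj & Hx & Hxj & Hwd & Hin & Hrest).
      simpl in Haj, Hxj. subst a x.
      destruct (Hd (S j) m') as (X1 & X2 & X3 & X4 & X5 & X6); [exact Hwd|lia|].
      assert (XS : Nat.iter (S m') gsrc (g (S j) m' d) = etaK j /\
                   Nat.iter (S m') gtgt (g (S j) m' d) = etaK j).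
      { rewrite !Nat.iter_succ, X4, X5. apply etaK_bd; lia. }
      destruct l as [|[e1 e2] l'].
      * change (g j (S m') (Nd j [(d, j)])) with (g (S j) m' d).
        destruct XS as [XS1 XS2].
        repeat split; auto; try lia.
        -- rewrite X3, wrg_succ. apply (f_equal2 pair); [lia|reflexivity].
        -- destruct m'.
           ++ change (g (S j) 0 d = etaK (S j)) in X4.
              change (g j 0 (rsrc 1 (Nd j [(d, j)]))) with (etaK j).
              rewrite X4. apply etaK_bd; lia.
           ++ change (g j (S m') (rsrc (S (S m')) (Nd j [(d, j)]))) with (g (S j) m' (rsrc (S m') d)).
              apply X6; lia.
        -- destruct m'.
           ++ change (g (S j) 0 d = etaK (S j)) in X5.
              change (g j 0 (rtgt 1 (Nd j [(d, j)]))) with (etaK j).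
              rewrite X5. apply etaK_bd; lia.
           ++ change (g j (S m') (rtgt (S (S m')) (Nd j [(d, j)]))) with (g (S j) m' (rtgt (S m') d)).
              apply X6; lia.
      * change (g j (S m') (Nd j ((d, j) :: (e1, e2) :: l'))) with
          (comp j m' (g (S j) m' d) (g j (S m') (Nd j ((e1, e2) :: l')))).
        assert (HwY : @wf (one n) j (S m') (Nd j ((e1, e2) :: l'))).
        { split; [simpl; lia|]. split; [reflexivity|]. exact Hrest. }
        destruct (IHl HF' HwY) as (Y1 & Y2 & Y3 & Y4 & Y5 & Y6).
        destruct XS as [XS1 XS2].
        assert (HC : Cmp j m' (g (S j) m' d) (g j (S m') (Nd j ((e1, e2) :: l')))).
        { unfold Cmp. repeat split; auto; lia. }
        destruct (comp_ok _ _ _ _ HC) as (C1 & C2 & C3).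
        destruct (comp_bd _ _ _ _ HC) as [C4 C5].
        repeat split; auto.
        -- rewrite C3, X3, Y3. cbn [snd]. rewrite wrg_succ, rcomp_wrg.
           apply (f_equal2 pair); reflexivity.
        -- destruct m'.
           ++ destruct (comp_bd0 _ _ _ HC) as [B1 _]. rewrite B1. reflexivity.
           ++ destruct (comp_bdS _ _ _ _ HC) as [B1 _]. rewrite B1.
              rewrite (proj1 (X6 ltac:(lia))), (proj1 (Y6 ltac:(lia))). reflexivity.
        -- destruct m'.
           ++ destruct (comp_bd0 _ _ _ HC) as [_ B1]. rewrite B1. reflexivity.
           ++ destruct (comp_bdS _ _ _ _ HC) as [_ B1]. rewrite B1.
              rewrite (proj2 (X6 ltac:(lia))), (proj2 (Y6 ltac:(lia))). reflexivity.
Qed.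

End Main.

Theorem mainTheorem6 (n : nat) (K : gset) (k : K -> T1 n)
  (etaK : one n -> K) (muK : tensor n K k K -> K)
  (gamma : T1 n -> K -> K -> K) (sigma : T1 n -> K) :
  is_operad n K k etaK muK ->
  is_contraction n K k gamma ->
  is_syscomp n K k etaK sigma ->
  exists khat : T1 n -> K,
    is_gmap (T1 n) K khat /\
    (forall pi : T1 n, gin pi -> k (khat pi) = pi) /\
    (forall m, m <= n -> forall pi : T1 n, gin pi -> gdim pi = m ->
       exists a : K, gin a /\ gdim a = m /\ k a = pi).
Proof.
  intros Hop Hc Hs.
  set (khat := fun pi : T1 n => g n K k etaK muK gamma sigma 0 (fst pi) (snd pi)).
  assert (KEY : forall pi : T1 n, gin pi ->
    gin (khat pi) /\ gdim (khat pi) = gdim pi /\ k (khat pi) = pi /\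
    (0 < gdim pi -> khat (gsrc pi) = gsrc (khat pi) /\ khat (gtgt pi) = gtgt (khat pi))).
  { intros [m r] [Hm Hw]. simpl in Hm, Hw.
    destruct (Pg_all n K k etaK muK gamma sigma Hop Hc Hs r 0 m Hw Hm)
      as (A1 & A2 & A3 & _ & _ & A6).
    unfold khat. cbn [fst snd gsrc gtgt gdim T1 Defs.T].
    repeat split; auto; try (intros; symmetry; apply A6; auto; fail);
      try (rewrite A3; reflexivity). }
  exists khat. split; [|split].
  - intros pi Hpi. destruct (KEY pi Hpi) as (A1 & A2 & A3 & A4). auto.
  - intros pi Hpi. apply KEY; auto.
  - intros m Hm pi Hpi Hd. exists (khat pi).
    destruct (KEY pi Hpi) as (A1 & A2 & A3 & A4). rewrite A2. auto.
Qed.
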